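(* Let $4\leq m\leq n$ be integers and suppose there exists a generalized quadrangle of order $(m,n)$. Let $m_1\leq n_1$ be integers with $3\le m_1\leq m$ and $n_1\leq n$. Then there exist $(m_1,n_1;8)$-bipartite biregular graphs of order $(m_1+n_1)mn$.
   Context: A generalized quadrangle is a finite point-line incidence geometry whose incidence (Levi) graph — the bipartite graph on points and lines with a point adjacent to a line iff incident — is connected, of diameter 4 and girth 8. It has order $(s,t)$ if each line has exactly $s+1$ points and each point lies on exactly $t+1$ lines. For integers $a,b\geq 2$ and even $g\ge4$, an $(a,b;g)$-bipartite biregular graph is a finite simple bipartite graph of girth exactly $g$ in which all vertices of one bipartition class have degree $a$ and all vertices of the other class have degree $b$. *)

(* Defs.v *)
From mathcomp Require Import all_boot.
Set Implicit Arguments. Unset Strict Implicit. Unset Printing Implicit Defensive.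

Definition simple_graph (T : finType) (e : rel T) : Prop :=
  symmetric e /\ irreflexive e.

Definition walk_len (T : finType) (e : rel T) (x y : T) (k : nat) : Prop :=
  exists s : seq T, [/\ size s = k, path e x s & last x s = y].

Definition dist_le (T : finType) (e : rel T) (x y : T) (k : nat) : Prop :=
  exists2 j, j <= k & walk_len e x y j.

Definition connected_graph (T : finType) (e : rel T) : Prop :=
  forall x y : T, exists k, walk_len e x y k.

Definition diameter_eq (T : finType) (e : rel T) (d : nat) : Prop :=
  (forall x y : T, dist_le e x y d) /\
  (exists x y : T, ~ dist_le e x y d.-1 /\ dist_le e x y d).

Definition has_cycle_len (T : finType) (e : rel T) (k : nat) : Prop :=
  exists s : seq T, [/\ 3 <= k, size s = k, uniq s & cycle e s].

Definition girth_eq (T : finType) (e : rel T) (g : nat) : Prop :=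
  has_cycle_len e g /\ (forall k, k < g -> ~ has_cycle_len e k).

Definition degree (T : finType) (e : rel T) (x : T) : nat := #|[set y | e x y]|.

Definition levi_rel (P L : finType) (I : P -> L -> bool) : rel (P + L) :=
  fun u v => match u, v with
             | inl p, inr l => I p l
             | inr l, inl p => I p l
             | _, _ => false
             end.

Definition is_GQ (P L : finType) (I : P -> L -> bool) : Prop :=
  let e := levi_rel I in
  [/\ connected_graph e, diameter_eq e 4 & girth_eq e 8].

Definition is_GQ_order (P L : finType) (I : P -> L -> bool) (s t : nat) : Prop :=
  [/\ is_GQ I,
      (forall l : L, #|[set p | I p l]| = s.+1) &
      (forall p : P, #|[set l | I p l]| = t.+1)].

Definition bipartite_biregular (T : finType) (e : rel T) (c : T -> bool)
    (a b g : nat) : Prop :=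
  [/\ [&& 2 <= a, 2 <= b, ~~ odd g & 4 <= g], simple_graph e,
      (forall x y, e x y -> c x != c y),
      (forall x, (c x -> degree e x = a) /\ (~~ c x -> degree e x = b)) &
      girth_eq e g].

(* Main.v *)
Require Import Defs.
From mathcomp Require Import all_boot zify.
Set Implicit Arguments. Unset Strict Implicit. Unset Printing Implicit Defensive.

Lemma card_part (A K : finType) (D : {set A}) (B : {set K}) (R : A -> K -> bool) c :
  (forall x, x \in D -> exists2 k, k \in B & R x k) ->
  (forall x k k', x \in D -> k \in B -> k' \in B -> R x k -> R x k' -> k = k') ->
  (forall k, k \in B -> #|[set x in D | R x k]| = c) ->
  #|D| = #|B| * c.
Proof.
move=> ex uq cc.
rewrite -sum_nat_const.
rewrite (eq_bigr (fun k => \sum_(x in D) (R x k : nat))); last first.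
  move=> k kB; rewrite -(cc k kB) -sum1_card.
  rewrite big_mkcond [RHS]big_mkcond /=.
  by apply: eq_bigr => x _; rewrite !inE; case: (x \in D); case: (R x k).
rewrite -sum1_card.
rewrite exchange_big /=.
apply: eq_bigr => x xD.
have [k kB Rk] := ex x xD.
rewrite (bigD1 k) //= Rk big1 // => k' /andP [k'B nk'].
case Rk': (R x k') => //.
by rewrite (uq x k' k) ?eqxx in nk'.
Qed.

Lemma ext_set (T : finType) (A B : {set T}) k :
  A \subset B -> #|A| <= k <= #|B| -> exists C : {set T}, [/\ A \subset C, C \subset B & #|C| = k].
Proof.
move=> AB /andP [].
elim: k => [|k IH].
  rewrite leqn0 => /eqP /cards0_eq -> _; exists set0; split => //; first exact: sub0set.
  by rewrite cards0.
rewrite leq_eqVlt => /orP [/eqP <- _|]; first by exists A.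
rewrite ltnS => Ak kB.
have [C [AC CB cC]] := IH Ak (ltnW kB).
have : 0 < #|B :\: C|.
  by rewrite cardsD (setIidPr CB) subn_gt0 cC.
case/card_gt0P => z; rewrite inE => /andP [zC zB].
exists (z |: C); split.
- by apply: subset_trans AC (subsetUr _ _).
- by rewrite subUset sub1set zB CB.
- by rewrite cardsU1 zC cC.
Qed.
Definition gq_ax (P L : finType) (I : P -> L -> bool) (s t : nat) : Prop :=
 [/\ (forall l, #|[set x | I x l]| = s.+1),
     (forall x, #|[set l | I x l]| = t.+1),
     (forall x x' l l', I x l -> I x' l -> I x l' -> I x' l' -> x = x' \/ l = l'),
     (forall x l, ~~ I x l -> exists y M, [/\ I x M, I y M & I y l]) &
     (forall x l y M y' M', ~~ I x l -> I x M -> I y M -> I y l ->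
        I x M' -> I y' M' -> I y' l -> y = y')].

Definition tr (P L : finType) (I : P -> L -> bool) : L -> P -> bool := fun l x => I x l.

Lemma puq2 (P L : finType) (I : P -> L -> bool) s t : gq_ax I s t ->
  forall x l y M y' M', ~~ I x l -> I x M -> I y M -> I y l ->
        I x M' -> I y' M' -> I y' l -> y = y' /\ M = M'.
Proof.
case=> _ _ lin _ uq x l y M y' M' h1 h2 h3 h4 h5 h6 h7.
have e := uq x l y M y' M' h1 h2 h3 h4 h5 h6 h7.
split => //; subst y'.
case: (lin x y M M' h2 h3 h5 h6) => // exy; subst y.
by rewrite h4 in h1.
Qed.

Lemma gq_dual (P L : finType) (I : P -> L -> bool) s t : gq_ax I s t -> gq_ax (tr I) t s.
Proof.
move=> G; case: (G) => cl cp lin ex uq; split.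
- by move=> l; rewrite -(cp l).
- by move=> x; rewrite -(cl x).
- move=> x x' l l' h1 h2 h3 h4; rewrite /tr in h1 h2 h3 h4.
  by case: (lin l l' x x' h1 h3 h2 h4); [right|left].
- move=> x l h; rewrite /tr in h *.
  by have [y [M [h1 h2 h3]]] := ex l x h; exists M, y; split.
- move=> x l y M y' M' h1 h2 h3 h4 h5 h6 h7; rewrite /tr in h1 h2 h3 h4 h5 h6 h7.
  by have [] := puq2 G h1 h4 h3 h2 h7 h6 h5.
Qed.

Definition near (P L : finType) (I : P -> L -> bool) (M0 : L) (Y : {set P}) : {set P} :=
  [set x | ~~ I x M0 & [exists y in Y, exists N, I x N && I y N]].

Lemma card_near (P L : finType) (I : P -> L -> bool) s t M0 (Y : {set P}) :
  gq_ax I s t -> (forall y, y \in Y -> I y M0) -> #|near I M0 Y| = #|Y| * (t * s).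
Proof.
move=> G YM; case: (G) => cl cp lin ex uq.
apply: (@card_part _ _ _ _ (fun x y => [exists N, I x N && I y N])).
- move=> x; rewrite inE => /andP [_ /existsP [y /andP [yY h]]].
  by exists y.
- move=> x y y' xD yY y'Y /existsP [N /andP [h1 h2]] /existsP [N' /andP [h3 h4]].
  move: xD; rewrite inE => /andP [xM _].
  exact: (uq x M0 y N y' N' xM h1 h2 (YM _ yY) h3 h4 (YM _ y'Y)).
move=> y yY.
have yM := YM _ yY.
have hB : #|[set N | I y N] :\ M0| = t.
  by have := cardsD1 M0 [set N | I y N]; rewrite (cp y) inE yM add1n => /succn_inj <-.
rewrite -hB.
apply: (@card_part _ _ _ _ (fun x N => I x N)).
- move=> x; rewrite !inE => /andP [/andP [xM _] /existsP [N /andP [h1 h2]]].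
  exists N => //; rewrite !inE h2 andbT.
  by apply/eqP => e; subst N; rewrite h1 in xM.
- move=> x N N'; rewrite !inE => /andP [/andP [xM _] _] /andP [nN yN] /andP [nN' yN'] h1 h2.
  case: (lin x y N N' h1 yN h2 yN') => // e; subst y; by rewrite yM in xM.
- move=> N; rewrite !inE => /andP [nN yN].
  have := cardsD1 y [set x | I x N]; rewrite (cl N) inE yN add1n => /succn_inj ->.
  apply: eq_card => x; rewrite !inE.
  apply/andP/andP => [[/andP [/andP [xM _] _] xN]|[nxy xN]].
    by split => //; apply/eqP => e; subst x; rewrite yM in xM.
  have xM : ~~ I x M0.
    apply/negP => xM; case: (lin x y N M0 xN yN xM yM) => e.
      by rewrite e eqxx in nxy.
    by rewrite e eqxx in nN.
  split => //; rewrite xM /=; apply/andP; split; last by apply/existsP; exists N; rewrite xN yN.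
  by apply/existsP; exists y; rewrite yY; apply/existsP; exists N; rewrite xN yN.
Qed.

Lemma ncol (P L : finType) (I : P -> L -> bool) s t p M0 (Y : {set P}) x K :
  gq_ax I s t -> I p M0 -> (forall y, y \in Y -> I y M0 && (y != p)) ->
  x \in near I M0 Y -> I x K -> ~~ I p K.
Proof.
move=> [_ _ _ _ uq] pM YM; rewrite inE => /andP [xM /existsP [y /andP [yY /existsP [N /andP [xN yN]]]]] xK.
apply/negP => pK; have /andP [yM nyp] := YM y yY.
by rewrite (uq x M0 p K y N xM xK pK pM xN yN yM) eqxx in nyp.
Qed.

Lemma deg_near (P L : finType) (I : P -> L -> bool) s t p M0 (Y : {set P}) (Z : {set L}) x :
  gq_ax I s t -> I p M0 -> (forall y, y \in Y -> I y M0 && (y != p)) ->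
  (forall M, M \in Z -> I p M && (M != M0)) ->
  x \in near I M0 Y -> #|[set l in near (tr I) p Z | I x l]| = #|Z|.
Proof.
move=> G pM YM ZM xD; have [cl cp lin ex uq] := G.
rewrite -[#|Z|]muln1.
apply: (@card_part _ _ _ _ (fun l M => [exists z, I z l && I z M])).
- move=> l; rewrite !inE /tr => /andP [/andP [_ /existsP [M /andP [MZ h]]] _].
  by exists M.
- move=> l M M'; rewrite !inE /tr => /andP [/andP [pl _] _] MZ M'Z.
  move=> /existsP [z /andP [zl zM]] /existsP [z' /andP [z'l z'M]].
  have /andP [pM1 _] := ZM M MZ; have /andP [pM2 _] := ZM M' M'Z.
  by have [] := puq2 G pl pM1 zM zl pM2 z'M z'l.
move=> M MZ; have /andP [pM1 nM] := ZM M MZ.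
have xM : ~~ I x M.
  by apply/negP => xM; have := ncol G pM YM xD xM; rewrite pM1.
have [z [l [xl zl zM]]] := ex x M xM.
rewrite -(cards1 l); apply: eq_card => l'; rewrite !inE /tr.
apply/andP/eqP => [[/andP [_ xl'] /existsP [z' /andP [z'l' z'M]]]|->].
  by have [] := puq2 G xM xl' z'l' z'M xl zl zM.
rewrite xl (ncol G pM YM xD xl) /= andbT.
split; last by apply/existsP; exists z; rewrite zl zM.
by apply/existsP; exists M; rewrite MZ; apply/existsP; exists z; rewrite zl zM.
Qed.

Lemma eq_inl (P L : finType) (x y : P) : (inl x == inl y :> P + L) = (x == y).
Proof. by apply/eqP/eqP => [[]|->]. Qed.
Lemma eq_inr (P L : finType) (x y : L) : (inr x == inr y :> P + L) = (x == y).
Proof. by apply/eqP/eqP => [[]|->]. Qed.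
Lemma eq_inlr (P L : finType) (x : P) (y : L) : (inl x == inr y :> P + L) = false.
Proof. by apply/eqP. Qed.
Lemma eq_inrl (P L : finType) (x : P) (y : L) : (inr y == inl x :> P + L) = false.
Proof. by apply/eqP. Qed.

Lemma gq_of (P L : finType) (I : P -> L -> bool) s t :
  is_GQ_order I s t -> gq_ax I s t.
Proof.
case=> [[_ [diam _] [_ gir]] cl cp].
have lin : forall x x' l l', I x l -> I x' l -> I x l' -> I x' l' -> x = x' \/ l = l'.
  move=> x x' l l' h1 h2 h3 h4.
  case: (eqVneq x x') => [->|nx]; first by left.
  case: (eqVneq l l') => [->|nl]; first by right.
  exfalso; apply: (gir 4) => //.
  exists [:: inl x; inr l; inl x'; inr l']; split => //=.
    by rewrite !inE /= ?eq_inl ?eq_inr ?eq_inlr ?eq_inrl ?orbF nx nl.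
  by rewrite h1 h2 h3 h4.
split => //.
- move=> x l xl.
  have [j jle [sq [sz pth lst]]] := diam (inl x) (inr l).
  move: jle sz pth lst.
  case: sq => [|v1 [|v2 [|v3 [|v4 [|v5 sq]]]]] //= jle sz; subst j.
  + by move=> h e; subst v1; rewrite andbT in h; rewrite h in xl.
  + by move=> h e; subst v2; case: v1 h => [?|M] /=; rewrite ?andbF.
  + move=> h e; subst v3; case: v1 h => [?|M] //=; case: v2 => [y|?] /=; rewrite ?andbF //.
    by rewrite andbT => /and3P [h1 h2 h3]; exists y, M.
  + move=> h e; subst v4; case: v1 h => [?|M] //=; case: v2 => [y|?] /=; rewrite ?andbF //.
    by case: v3 => [?|?] /=; rewrite ?andbF.
  + by rewrite !ltnS ltn0 in jle.
- move=> x l y M y' M' h1 h2 h3 h4 h5 h6 h7.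
  apply/eqP/negP => /negP ny.
  case: (eqVneq M M') => [eM|nM].
    subst M'; case: (lin y y' M l h3 h6 h4 h7) => [e|e]; first by rewrite e eqxx in ny.
    by subst M; rewrite h2 in h1.
  apply: (gir 6) => //.
  exists [:: inl x; inr M; inl y; inr l; inl y'; inr M']; split => //=.
    rewrite !inE /= ?eq_inl ?eq_inr ?eq_inlr ?eq_inrl ?orbF ny /=.
    have -> : (x == y) = false by apply/negbTE/eqP => e; subst y; rewrite h4 in h1.
    have -> : (x == y') = false by apply/negbTE/eqP => e; subst y'; rewrite h7 in h1.
    have -> : (M == l) = false by apply/negbTE/eqP => e; subst M; rewrite h2 in h1.
    have -> : (l == M') = false by apply/negbTE/eqP => e; subst M'; rewrite h5 in h1.
    by rewrite (negbTE nM).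
  by rewrite h2 h3 h4 h5 h6 h7.
Qed.

Lemma pick2 (T : finType) (A : {set T}) a : 1 < #|A| -> exists2 b, b \in A & b != a.
Proof.
rewrite (cardsD1 a) => h.
have : 0 < #|A :\ a| by move: h; case: (a \in A); case: #|A :\ a|.
by case/card_gt0P => b; rewrite !inE => /andP [h1 h2]; exists b.
Qed.

Lemma pick3 (T : finType) (A : {set T}) a a' : 2 < #|A| ->
  exists b, [/\ b \in A, b != a & b != a'].
Proof.
rewrite (cardsD1 a) (cardsD1 a' (A :\ a)) => h.
have : 0 < #|A :\ a :\ a'| by move: h; case: (a \in A); case: (a' \in A :\ a); case: #|A :\ a :\ a'|.
by case/card_gt0P => b; rewrite !inE => /and3P [h1 h2 h3]; exists b.
Qed.

Lemma cyc8 (P L : finType) (I : P -> L -> bool) s t p M0 :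
 gq_ax I s t -> 1 < s -> 1 < t -> I p M0 ->
 exists (x1 x2 x3 x4 : P) (l1 l2 l3 l4 : L) (y f2 f4 : P) (A B2 B4 : L),
 [&& I x1 l1, I x2 l1, I x2 l2, I x3 l2, I x3 l3, I x4 l3, I x4 l4 & I x1 l4] /\
 [&& x1 != x2, x1 != x3, x1 != x4, x2 != x3, x2 != x4 & x3 != x4] /\
 [&& l1 != l2, l1 != l3, l1 != l4, l2 != l3, l2 != l4 & l3 != l4] /\
 [/\ I y M0 && (y != p), I f2 M0 && (f2 != p) & I f4 M0 && (f4 != p)] /\
 [/\ I p A && (A != M0), I p B2 && (B2 != M0) & I p B4 && (B4 != M0)] /\
 [/\ ~~ I x1 M0 && [exists N, I x1 N && I y N], ~~ I x2 M0 && [exists N, I x2 N && I f2 N],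
     ~~ I x3 M0 && [exists N, I x3 N && I y N] & ~~ I x4 M0 && [exists N, I x4 N && I f4 N]] /\
 [/\ ~~ I p l1 && [exists z, I z l1 && I z A], ~~ I p l2 && [exists z, I z l2 && I z B2],
     ~~ I p l3 && [exists z, I z l3 && I z A] & ~~ I p l4 && [exists z, I z l4 && I z B4]].
Proof.
move=> G s2 t2 pM; have [cl cp lin ex uq] := G.
have [y] : exists2 y, y \in [set x | I x M0] & y != p by apply: pick2; rewrite cl; clear -s2; lia.
rewrite inE => yM nyp.
have [A] : exists2 A, A \in [set l | I p l] & A != M0 by apply: pick2; rewrite cp; clear -t2; lia.
rewrite inE => pA nAM.
have [N] : exists2 N, N \in [set l | I y l] & N != M0 by apply: pick2; rewrite cp; clear -t2; lia.
rewrite inE => yN nNM.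
have [N' [] ] : exists N', [/\ N' \in [set l | I y l], N' != M0 & N' != N] by apply: pick3; rewrite cp; clear -t2; lia.
rewrite inE => yN' nN'M nN'N.
have [x1] : exists2 x1, x1 \in [set x | I x N] & x1 != y by apply: pick2; rewrite cl; clear -s2; lia.
rewrite inE => x1N nx1y.
have pN : ~~ I p N.
  apply/negP => pN; case: (lin p y M0 N pM yM pN yN) => e; [by rewrite e eqxx in nyp|by rewrite e eqxx in nNM].
have pN' : ~~ I p N'.
  apply/negP => hpN; case: (lin p y M0 N' pM yM hpN yN') => e; [by rewrite e eqxx in nyp|by rewrite e eqxx in nN'M].
have yA : ~~ I y A.
  apply/negP => yA; case: (lin p y M0 A pM yM pA yA) => e; [by rewrite e eqxx in nyp|by rewrite e eqxx in nAM].
have offM : forall x K, I x K -> I y K -> K != M0 -> x != y -> ~~ I x M0.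
  move=> x K xK yK nK nx; apply/negP => xM.
  by case: (lin x y K M0 xK yK xM yM) => e; [rewrite e eqxx in nx|rewrite e eqxx in nK].
have offA : forall x K, I x K -> I y K -> K != M0 -> x != y -> ~~ I x A.
  move=> x K xK yK nK nx; apply/negP => xA.
  have pK : ~~ I p K.
    apply/negP => pK; case: (lin p y M0 K pM yM pK yK) => e; [by rewrite e eqxx in nyp|by rewrite e eqxx in nK].
  by rewrite (uq p K y M0 x A pK pM yM yK pA xA xK) eqxx in nx.
have x1M := offM x1 N x1N yN nNM nx1y.
have x1A := offA x1 N x1N yN nNM nx1y.
have [a [l1 [x1l1 al1 aA]]] := ex x1 A x1A.
have nay : a != y by apply/eqP => e; subst a; rewrite aA in yA.
have aN' : ~~ I a N'.
  by apply/negP => aN'; rewrite (uq p N' y M0 a A pN' pM yM yN' pA aA aN') eqxx in nay.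
have [x3 [a' [l3 [x3N' nx3y x3l3 a'l3 [a'A naa']]]]] :
    exists x3 a' l3, [/\ I x3 N', x3 != y, I x3 l3, I a' l3 & (I a' A /\ a' != a)].
  have [u] : exists2 u, u \in [set x | I x N'] & u != y by apply: pick2; rewrite cl; clear -s2; lia.
  rewrite inE => uN' nuy.
  have [v []] : exists v, [/\ v \in [set x | I x N'], v != y & v != u] by apply: pick3; rewrite cl; clear -s2; lia.
  rewrite inE => vN' nvy nvu.
  have [au [lu [ulu aulu auA]]] := ex u A (offA u N' uN' yN' nN'M nuy).
  have [av [lv [vlv avlv avA]]] := ex v A (offA v N' vN' yN' nN'M nvy).
  case: (eqVneq au a) => [e|ne]; last by exists u, au, lu.
  subst au; case: (eqVneq av a) => [e|ne]; last by exists v, av, lv.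
  subst av; by rewrite (uq a N' u lu v lv aN' aulu ulu uN' avlv vlv vN') eqxx in nvu.
have x3M := offM x3 N' x3N' yN' nN'M nx3y.
have x3A := offA x3 N' x3N' yN' nN'M nx3y.
have na'y : a' != y by apply/eqP => e; subst a'; rewrite a'A in yA.
have l13 : forall w, I w l1 -> I w l3 -> False.
  move=> w wl1 wl3.
  have al3 : ~~ I a l3.
    apply/negP => al3; case: (lin a a' l3 A al3 a'l3 aA a'A) => e; first by rewrite e eqxx in naa'.
    by subst l3; rewrite x3l3 in x3A.
  have e := uq a l3 a' A w l1 al3 aA a'A a'l3 al1 wl1 wl3; subst w.
  case: (lin a a' l1 A al1 wl1 aA a'A) => e; first by rewrite e eqxx in naa'.
  by subst l1; rewrite x1l1 in x1A.
have x13 : forall K, I x1 K -> I x3 K -> False.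
  move=> K x1K x3K.
  have x1N' : ~~ I x1 N'.
    apply/negP => x1N'; case: (lin x1 y N N' x1N yN x1N' yN') => e; first by rewrite e eqxx in nx1y.
    by rewrite e eqxx in nN'N.
  by rewrite (uq x1 N' y N x3 K x1N' x1N yN yN' x1K x3K x3N') eqxx in nx3y.
have x3l1 : ~~ I x3 l1 by apply/negP => h; exact: (x13 l1).
have x1l3 : ~~ I x1 l3 by apply/negP => h; exact: (x13 l3).
have [x2 [l2 [x3l2 x2l2 x2l1]]] := ex x3 l1 x3l1.
have [x4 [l4 [x1l4 x4l4 x4l3]]] := ex x1 l3 x1l3.
have npy : forall x K K', ~~ I x M0 -> I x K -> I y K -> I x K' -> ~~ I p K'.
  move=> x K K' xM xK yK xK'; apply/negP => pK'.
  by rewrite (uq x M0 p K' y K xM xK' pK' pM xK yK yM) eqxx in nyp.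
have pl1 := npy x1 N l1 x1M x1N yN x1l1.
have pl3 := npy x3 N' l3 x3M x3N' yN' x3l3.
have pl2 := npy x3 N' l2 x3M x3N' yN' x3l2.
have pl4 := npy x1 N l4 x1M x1N yN x1l4.
have yl1 : ~~ I y l1.
  apply/negP => yl1; case: (lin x1 y l1 N x1l1 yl1 x1N yN) => e; first by rewrite e eqxx in nx1y.
  subst l1; by rewrite (uq p N y M0 a A pN pM yM yN pA aA al1) eqxx in nay.
have yl3 : ~~ I y l3.
  apply/negP => yl3; case: (lin x3 y l3 N' x3l3 yl3 x3N' yN') => e; first by rewrite e eqxx in nx3y.
  subst l3; by rewrite (uq p N' y M0 a' A pN' pM yM yN' pA a'A a'l3) eqxx in na'y.
have x2M : ~~ I x2 M0.
  apply/negP => x2M; have e := uq x1 M0 y N x2 l1 x1M x1N yN yM x1l1 x2l1 x2M.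
  by subst x2; rewrite x2l1 in yl1.
have x4M : ~~ I x4 M0.
  apply/negP => x4M; have e := uq x3 M0 y N' x4 l3 x3M x3N' yN' yM x3l3 x4l3 x4M.
  by subst x4; rewrite x4l3 in yl3.
have [f2 [K2 [x2K2 f2K2 f2M]]] := ex x2 M0 x2M.
have [f4 [K4 [x4K4 f4K4 f4M]]] := ex x4 M0 x4M.
have nf2p : f2 != p.
  apply/eqP => e; subst f2.
  have e := uq p l1 a A x2 K2 pl1 pA aA al1 f2K2 x2K2 x2l1; subst x2.
  by rewrite (uq x3 A a' l3 a l2 x3A x3l3 a'l3 a'A x3l2 x2l2 aA) eqxx in naa'.
have nf4p : f4 != p.
  apply/eqP => e; subst f4.
  have e := uq p l3 a' A x4 K4 pl3 pA a'A a'l3 f4K4 x4K4 x4l3; subst x4.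
  by rewrite (uq x1 A a l1 a' l4 x1A x1l1 al1 aA x1l4 x4l4 a'A) eqxx in naa'.
have [b2 [B2 [pB2 b2B2 b2l2]]] := ex p l2 pl2.
have [b4 [B4 [pB4 b4B4 b4l4]]] := ex p l4 pl4.
have nB2 : B2 != M0.
  apply/eqP => e; subst B2.
  have e := uq x3 M0 y N' b2 l2 x3M x3N' yN' yM x3l2 b2l2 b2B2; subst b2.
  case: (lin x3 y l2 N' x3l2 b2l2 x3N' yN') => e; first by rewrite e eqxx in nx3y.
  subst l2; have e := uq y l1 x1 N x2 N' yl1 yN x1N x1l1 yN' x2l2 x2l1; subst x2.
  exact: (x13 N').
have nB4 : B4 != M0.
  apply/eqP => e; subst B4.
  have e := uq x1 M0 y N b4 l4 x1M x1N yN yM x1l4 b4l4 b4B4; subst b4.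
  case: (lin x1 y l4 N x1l4 b4l4 x1N yN) => e; first by rewrite e eqxx in nx1y.
  subst l4; have e := uq y l3 x3 N' x4 N yl3 yN' x3N' x3l3 yN x4l4 x4l3; subst x4.
  exact: (x13 N).
exists x1, x2, x3, x4, l1, l2, l3, l4, y, f2, f4, A, B2, B4.
split; first by rewrite x1l1 x2l1 x2l2 x3l2 x3l3 x4l3 x4l4 x1l4.
split.
  have n12 : x1 != x2 by apply/eqP => e; subst x2; exact: (x13 l2).
  have n13 : x1 != x3 by apply/eqP => e; subst x3; exact: (x13 l1).
  have n14 : x1 != x4 by apply/eqP => e; subst x4; rewrite x4l3 in x1l3.
  have n23 : x2 != x3 by apply/eqP => e; subst x3; rewrite x2l1 in x3l1.
  have n24 : x2 != x4 by apply/eqP => e; subst x4; exact: (l13 x2).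
  have n34 : x3 != x4 by apply/eqP => e; subst x4; exact: (x13 l4).
  by rewrite n12 n13 n14 n23 n24 n34.
split.
  have m12 : l1 != l2 by apply/eqP => e; subst l2; rewrite x3l2 in x3l1.
  have m13 : l1 != l3 by apply/eqP => e; subst l3; exact: (l13 x1).
  have m14 : l1 != l4 by apply/eqP => e; subst l4; exact: (l13 x4).
  have m23 : l2 != l3 by apply/eqP => e; subst l3; exact: (l13 x2).
  have m24 : l2 != l4 by apply/eqP => e; subst l4; exact: (x13 l2).
  have m34 : l3 != l4 by apply/eqP => e; subst l4; rewrite x1l4 in x1l3.
  by rewrite m12 m13 m14 m23 m24 m34.
split; first by split; apply/andP; split.
split; first by split; apply/andP; split.
split.
  split; apply/andP; split => //; apply/existsP.
  - by exists N; rewrite x1N yN.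
  - by exists K2; rewrite x2K2 f2K2.
  - by exists N'; rewrite x3N' yN'.
  - by exists K4; rewrite x4K4 f4K4.
split; apply/andP; split => //; apply/existsP.
- by exists a; rewrite al1 aA.
- by exists b2; rewrite b2l2 b2B2.
- by exists a'; rewrite a'l3 a'A.
- by exists b4; rewrite b4l4 b4B4.
Qed.

Lemma card_sub_pred (X : finType) (S : {set X}) (Q : pred X) :
  #|[set v : {x | x \in S} | Q (val v)]| = #|[set x in S | Q x]|.
Proof.
rewrite -(card_imset _ val_inj); apply: eq_card => x; rewrite [RHS]inE.
apply/imsetP/andP => [[v]|[xS Qx]].
  by rewrite inE => Qv ->; split => //; exact: valP.
by exists (exist _ x xS); rewrite ?inE.
Qed.

Lemma mem_inlU (P L : finType) (A : {set P}) (B : {set L}) x :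
  (inl x \in inl @: A :|: inr @: B) = (x \in A).
Proof.
rewrite inE mem_imset; last by move=> ? ? [].
by case: (x \in A) => //=; apply/imsetP => -[].
Qed.

Lemma mem_inrU (P L : finType) (A : {set P}) (B : {set L}) x :
  (inr x \in inl @: A :|: inr @: B) = (x \in B).
Proof.
rewrite inE (mem_imset _ _ (@inr_inj P L)).
by have -> : (inr x \in inl @: A) = false by apply/imsetP => -[].
Qed.

Unset Implicit Arguments.

Theorem mainTheorem5 (m n : nat) :
  4 <= m <= n ->
  (exists (P L : finType) (I : P -> L -> bool), is_GQ_order I m n) ->
  forall m1 n1 : nat, 3 <= m1 <= m -> m1 <= n1 -> n1 <= n ->
  exists (T : finType) (e : rel T) (c : T -> bool),
    bipartite_biregular e c m1 n1 8 /\ #|T| = ((m1 + n1) * m * n)%N.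
Proof.
move=> /andP [m4 mn] [P [L [I GQ]]] m1 n1 /andP [m13 m1m] m1n1 n1n.
have G := gq_of GQ.
have gir : forall k, k < 8 -> ~ has_cycle_len (levi_rel I) k.
  by case: GQ => [[_ _ [_ gir]] _ _].
have [p [M0 pM]] : exists p M0, I p M0.
  case: GQ => [[_ [_ [v _]] _] cl cp].
  case: v => [p|l].
  - have : 0 < #|[set l | I p l]| by rewrite cp.
    by case/card_gt0P => M0; rewrite inE => h; exists p, M0.
  - have : 0 < #|[set x | I x l]| by rewrite cl.
    by case/card_gt0P => x; rewrite inE => h; exists x, l.
have s2 : 1 < m by clear -m4; lia.
have t2 : 1 < n by clear -m4 mn; lia.
have [x1 [x2 [x3 [x4 [l1 [l2 [l3 [l4 [y [f2 [f4 [A [B2 [B4 [inc [dx [dl [[hy hf2 hf4] [[hA hB2 hB4] [[hx1 hx2 hx3 hx4] [hl1 hl2 hl3 hl4]]]]]]]]]]]]]]]]]]]]]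
  := cyc8 G s2 t2 pM.
have [cl cp _ _ _] := G.
have [Y [Y1 Y2 cY]] : exists Y : {set P},
    [/\ [set y; f2; f4] \subset Y, Y \subset [set u | I u M0] :\ p & #|Y| = m1].
  apply: ext_set.
    apply/subsetP => u; rewrite !inE => /orP [/orP [/eqP->|/eqP->]|/eqP->]; rewrite andbC //.
  apply/andP; split.
    apply: leq_trans (leq_card_setU _ _) _; rewrite cardsU1 !cards1.
    by case: (_ \notin _); clear -m13; lia.
  have := cardsD1 p [set u | I u M0]; rewrite cl inE pM add1n => /succn_inj <-.
  exact: m1m.
have [Z [Z1 Z2 cZ]] : exists Z : {set L},
    [/\ [set A; B2; B4] \subset Z, Z \subset [set K | I p K] :\ M0 & #|Z| = n1].
  apply: ext_set.
    apply/subsetP => u; rewrite !inE => /orP [/orP [/eqP->|/eqP->]|/eqP->]; rewrite andbC //.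
  apply/andP; split.
    apply: leq_trans (leq_card_setU _ _) _; rewrite cardsU1 !cards1.
    by case: (_ \notin _); clear -m13 m1n1; lia.
  have := cardsD1 M0 [set K | I p K]; rewrite cp inE pM add1n => /succn_inj <-.
  exact: n1n.
have YM : forall u, u \in Y -> I u M0 && (u != p).
  by move=> u /(subsetP Y2); rewrite !inE andbC.
have ZM : forall K, K \in Z -> I p K && (K != M0).
  by move=> K /(subsetP Z2); rewrite !inE andbC.
have inY : forall u, u \in [set y; f2; f4] -> u \in Y by move=> u /(subsetP Y1).
have inZ : forall u, u \in [set A; B2; B4] -> u \in Z by move=> u /(subsetP Z1).
have yY : y \in Y by apply: inY; rewrite !inE eqxx.
have f2Y : f2 \in Y by apply: inY; rewrite !inE eqxx !orbT.
have f4Y : f4 \in Y by apply: inY; rewrite !inE eqxx !orbT.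
have AZ : A \in Z by apply: inZ; rewrite !inE eqxx.
have B2Z : B2 \in Z by apply: inZ; rewrite !inE eqxx !orbT.
have B4Z : B4 \in Z by apply: inZ; rewrite !inE eqxx !orbT.
set P' := near I M0 Y.
set L' := near (tr I) p Z.
have inP : forall x u, ~~ I x M0 && [exists N, I x N && I u N] -> u \in Y -> x \in P'.
  move=> x u /andP [h1 h2] uY; rewrite inE h1 /=; apply/existsP; exists u; by rewrite uY.
have inL : forall l K, ~~ I p l && [exists z, I z l && I z K] -> K \in Z -> l \in L'.
  move=> l K /andP [h1 h2] KZ; rewrite inE /tr h1 /=; apply/existsP; exists K; by rewrite KZ.
set S : {set P + L} := inl @: P' :|: inr @: L'.
have h1 : inl x1 \in S by rewrite mem_inlU (inP _ _ hx1 yY).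
have h2 : inl x2 \in S by rewrite mem_inlU (inP _ _ hx2 f2Y).
have h3 : inl x3 \in S by rewrite mem_inlU (inP _ _ hx3 yY).
have h4 : inl x4 \in S by rewrite mem_inlU (inP _ _ hx4 f4Y).
have k1 : inr l1 \in S by rewrite mem_inrU (inL _ _ hl1 AZ).
have k2 : inr l2 \in S by rewrite mem_inrU (inL _ _ hl2 B2Z).
have k3 : inr l3 \in S by rewrite mem_inrU (inL _ _ hl3 AZ).
have k4 : inr l4 \in S by rewrite mem_inrU (inL _ _ hl4 B4Z).
pose T := {v : P + L | v \in S}.
pose e : rel T := relpre val (levi_rel I).
pose c : T -> bool := fun v => if val v is inr _ then true else false.
exists T, e, c; split; last first.
  rewrite card_sig.
  have -> : #|[pred x | x \in S]| = #|S| by [].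
  rewrite cardsU.
  have -> : inl @: P' :&: inr @: L' = set0.
    apply/setP => u; rewrite !inE; case: u => u.
      have -> : (inl u \in inr @: L') = false by apply/imsetP => -[].
      by rewrite andbF.
    by have -> : (inr u \in inl @: P') = false by apply/imsetP => -[].
  rewrite cards0 subn0 (card_imset _ (@inl_inj P L)) (card_imset _ (@inr_inj P L)).
  rewrite (card_near G) ?(card_near (gq_dual G)) ?cY ?cZ.
  - by rewrite mulnDl; clear; lia.
  - by move=> u /ZM /andP [].
  - by move=> u /YM /andP [].
have degE : forall v : T, degree e v = #|[set u in S | levi_rel I (val v) u]|.
  by move=> v; rewrite /degree -card_sub_pred.
split.
- by apply/and4P; split => //; clear -m13 m1n1; lia.
- split.
    by move=> u v; rewrite /e /=; case: (val u) => ?; case: (val v) => ?.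
  by move=> u; rewrite /e /=; case: (val u).
- by move=> u v; rewrite /e /c /=; case: (val u) => ?; case: (val v) => ?.
- case=> [[x|l] hv]; rewrite /c /=; split => // _; rewrite degE /=.
  + rewrite mem_inlU in hv.
    rewrite -cZ -(deg_near G pM YM ZM hv) -[RHS](card_imset _ (@inr_inj P L)).
    apply: eq_card => u; rewrite [in LHS]inE; case: u => [x'|l] /=.
      by rewrite andbF; symmetry; apply/imsetP => -[].
    by rewrite mem_inrU (mem_imset _ _ (@inr_inj P L)) inE.
  + rewrite mem_inrU in hv.
    rewrite -cY -(deg_near (gq_dual G) pM ZM YM hv) -[RHS](card_imset _ (@inl_inj P L)).
    apply: eq_card => u; rewrite [in LHS]inE; case: u => [x|l'] /=.
      by rewrite mem_inlU (mem_imset _ _ (@inl_inj P L)) inE.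
    by rewrite andbF; symmetry; apply/imsetP => -[].
- split.
    exists ([:: exist _ (inl x1) h1; exist _ (inr l1) k1; exist _ (inl x2) h2; exist _ (inr l2) k2;
              exist _ (inl x3) h3; exist _ (inr l3) k3; exist _ (inl x4) h4; exist _ (inr l4) k4] : seq T).
    split => //.
      rewrite -(map_inj_uniq val_inj) /=.
      move: dx => /and5P [n12 n13 n14 n23 /andP [n24 n34]].
      move: dl => /and5P [q12 q13 q14 q23 /andP [q24 q34]].
      rewrite !inE ?eq_inl ?eq_inr ?eq_inlr ?eq_inrl ?orbF.
      by rewrite (negbTE n12) (negbTE n13) (negbTE n14) (negbTE n23) (negbTE n24) (negbTE n34)
        (negbTE q12) (negbTE q13) (negbTE q14) (negbTE q23) (negbTE q24) (negbTE q34).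
    rewrite /e -cycle_map /=.
    by rewrite andbT.
  move=> k hk [sq [hk3 sz uq cy]]; apply: (gir k hk); exists (map val sq); split => //.
  - by rewrite size_map.
  - by rewrite (map_inj_uniq val_inj).
  - by rewrite cycle_map.
Qed.
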